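(* Let $q(x)=\sum_{i=1}^nq_i(x_i)$, where each $q_i:\mathbb{R}\to\mathbb{R}\cup\{+\infty\}$ is proper, convex and lower semicontinuous and $\mathrm{gph}\,\partial q_i$ is the polygonal line in $\mathbb{R}^2$ connecting successively the points $(\xi^i_1,-\infty),(\xi^i_1,\eta^i_1),(\xi^i_2,\eta^i_2),\dots,(\xi^i_{2m_i},\eta^i_{2m_i}),(\xi^i_{2m_i},+\infty)$ for some integer $m_i\ge1$, where $\Delta\xi^i_j:=\xi^i_{j+1}-\xi^i_j>0$ for odd $j$, $\Delta\xi^i_j=0$ for even $j$, $\Delta\eta^i_j:=\eta^i_{j+1}-\eta^i_j\ge0$ for odd $j$ and $\Delta\eta^i_j>0$ for even $j$. Let $(x,x^* )\in\mathrm{gph}\,\partial q$, set $\mathcal{A}_i=\{\xi^i_1\}\cup\{\xi^i_{2m_i}\}\cup\{\xi^i_j:\Delta\xi^i_j=0\}$, and let $G$ be the $n\times n$ diagonal matrix with \[G_{ii}=\begin{cases}1&\text{if }x_i\in\mathcal{A}_i,\\ \dfrac{\Delta\eta^i_j}{\Delta\xi^i_j+\Delta\eta^i_j}&\text{if }x_i\in[\xi^i_j,\xi^i_{j+1}]\setminus\mathcal{A}_i\text{ and }j\in\{1,\dots,2m_i\}\text{ is odd},\end{cases}\qquad i=1,\dots,n.\] Then $G$ is positive semidefinite, $\|G\|\le1$, and $\{((I-G)v^*,Gv^* ):v^*\in\mathbb{R}^n\}\subset\mathrm{gph}\, D^*(\partial q)(x,x^* )$.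
   Context: $\partial$ denotes the convex subdifferential. The polygonal line consists of the vertical ray from $(\xi^i_1,-\infty)$ to $(\xi^i_1,\eta^i_1)$, the segments between consecutive listed points, and the vertical ray from $(\xi^i_{2m_i},\eta^i_{2m_i})$ upward. $D^*$ is the limiting (Mordukhovich) coderivative: $D^*F(\bar x,\bar y)(v^* )=\{u^*:(u^*,-v^* )\in N_{\mathrm{gph}\, F}(\bar x,\bar y)\}$ with $N$ the limiting normal cone (limits of regular normals, the regular normal cone being the polar of the contingent cone), and $\mathrm{gph}\, D^*F(\bar x,\bar y)=\{(v^*,u^* ):u^*\in D^*F(\bar x,\bar y)(v^* )\}$. $\|G\|$ is the spectral norm. *)

(* Defs.v *)
From HB Require Import structures.
From mathcomp Require Import all_boot all_order all_algebra.
From mathcomp Require Import all_classical all_reals all_analysis.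
Set Implicit Arguments. Unset Strict Implicit. Unset Printing Implicit Defensive.
Import Order.TTheory GRing.Theory Num.Theory.
Import numFieldNormedType.Exports.
Local Open Scope classical_set_scope.
Local Open Scope ring_scope.

Section Defs.
Variable R : realType.

Definition proper_fun (f : R -> \bar R) : Prop :=
  (forall t, f t != -oo%E) /\ (exists t, f t \is a fin_num).

Definition convex_fun (f : R -> \bar R) : Prop :=
  forall (x y l : R), (0 < l < 1)%R ->
    (f (l * x + (1 - l) * y)%R <= l%:E * f x + (1 - l)%:E * f y)%E.

Definition lsc_fun (f : R -> \bar R) : Prop :=
  forall (t a : R), (a%:E < f t)%E ->
    exists2 d : R, 0 < d & forall s, `|s - t| < d -> (a%:E < f s)%E.

Definition subdiff1 (f : R -> \bar R) (t : R) : set R :=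
  [set s | f t \is a fin_num /\ forall y, (f t + (s * (y - t))%:E <= f y)%E].

Definition gph1 (F : R -> set R) : set (R * R) := [set p | F p.1 p.2].

Definition polygonal_line (m : nat) (xi eta : nat -> R) : set (R * R) :=
  [set p | (p.1 = xi 1%N /\ p.2 <= eta 1%N)
        \/ (p.1 = xi (2 * m)%N /\ eta (2 * m)%N <= p.2)
        \/ (exists j : nat, (1 <= j < 2 * m)%N /\
             exists2 t : R, 0 <= t <= 1 &
               p = ((1 - t) * xi j + t * xi j.+1, (1 - t) * eta j + t * eta j.+1))].

Definition dotv n (u v : 'cV[R]_n) : R := \sum_(i < n) u i ord0 * v i ord0.

Definition eucl_norm n (u : 'cV[R]_n) : R := Num.sqrt (dotv u u).

Definition spectral_norm n (A : 'M[R]_n) : R :=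
  sup [set eucl_norm (A *m v) | v in [set v : 'cV[R]_n | eucl_norm v = 1]].

Definition psd n (A : 'M[R]_n) : Prop := forall v : 'cV[R]_n, 0 <= dotv v (A *m v).

Definition subdiff n (f : 'cV[R]_n -> \bar R) (x : 'cV[R]_n) : set 'cV[R]_n :=
  [set s | f x \is a fin_num /\ forall y, (f x + (dotv s (y - x))%:E <= f y)%E].

Definition dot2 n (p q : 'cV[R]_n * 'cV[R]_n) : R := dotv p.1 q.1 + dotv p.2 q.2.

Definition gph n (F : 'cV[R]_n -> set 'cV[R]_n) : set ('cV[R]_n * 'cV[R]_n) :=
  [set p | F p.1 p.2].

Definition contingent_cone n (C : set ('cV[R]_n * 'cV[R]_n)) (z : 'cV[R]_n * 'cV[R]_n)
  : set ('cV[R]_n * 'cV[R]_n) :=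
  [set w | exists (t : nat -> R) (w_ : nat -> 'cV[R]_n * 'cV[R]_n),
      (forall k, 0 < t k) /\ t @ \oo --> 0 /\ w_ @ \oo --> w /\
      (forall k, C (z.1 + t k *: (w_ k).1, z.2 + t k *: (w_ k).2))].

Definition regular_normal_cone n (C : set ('cV[R]_n * 'cV[R]_n)) (z : 'cV[R]_n * 'cV[R]_n)
  : set ('cV[R]_n * 'cV[R]_n) :=
  [set v | forall w, contingent_cone C z w -> dot2 v w <= 0].

Definition limiting_normal_cone n (C : set ('cV[R]_n * 'cV[R]_n)) (z : 'cV[R]_n * 'cV[R]_n)
  : set ('cV[R]_n * 'cV[R]_n) :=
  [set v | C z /\ exists (z_ v_ : nat -> 'cV[R]_n * 'cV[R]_n),
      (forall k, C (z_ k)) /\ z_ @ \oo --> z /\ v_ @ \oo --> v /\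
      (forall k, regular_normal_cone C (z_ k) (v_ k))].

Definition coderivative n (F : 'cV[R]_n -> set 'cV[R]_n) (x y : 'cV[R]_n) (v : 'cV[R]_n)
  : set 'cV[R]_n :=
  [set u | limiting_normal_cone (gph F) (x, y) (u, - v)].

Definition gph_coderivative n (F : 'cV[R]_n -> set 'cV[R]_n) (x y : 'cV[R]_n)
  : set ('cV[R]_n * 'cV[R]_n) :=
  [set p | coderivative F x y p.1 p.2].

Definition sep_sum n (qi : 'I_n -> R -> \bar R) (x : 'cV[R]_n) : \bar R :=
  (\sum_(i < n) qi i (x i ord0))%E.

Definition Aset (m : nat) (xi : nat -> R) : set R :=
  [set t | t = xi 1%N \/ t = xi (2 * m)%N \/
           exists j : nat, (1 <= j < 2 * m)%N /\ xi j.+1 - xi j = 0 /\ t = xi j].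

End Defs.

(* Main.v *)
Require Import Defs.
From HB Require Import structures.
From mathcomp Require Import all_boot all_order all_algebra.
From mathcomp Require Import all_classical all_reals all_analysis.
From mathcomp Require Import ring lra zify.
From Stdlib Require Import Lia.
Import Order.TTheory GRing.Theory Num.Theory.
Import numFieldNormedType.Exports.
Local Open Scope classical_set_scope.
Local Open Scope ring_scope.

Section Poly.
Variables (R : realType) (m : nat) (xi eta : nat -> R).
Hypothesis hm : (1 <= m)%N.
Hypothesis hD : forall j, (1 <= j < 2 * m)%N ->
  (odd j -> 0 < xi j.+1 - xi j /\ 0 <= eta j.+1 - eta j) /\
  (~~ odd j -> xi j.+1 - xi j = 0 /\ 0 < eta j.+1 - eta j).

Lemma stepx j : (1 <= j < 2 * m)%N -> xi j <= xi j.+1.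
Proof.
move=> hj; have [h1 h2] := hD _ hj; case: (boolP (odd j)) => o.
  by have [] := h1 o; lra.
by have [] := h2 o; lra.
Qed.

Lemma stepy j : (1 <= j < 2 * m)%N -> eta j <= eta j.+1.
Proof.
move=> hj; have [h1 h2] := hD _ hj; case: (boolP (odd j)) => o.
  by have [] := h1 o; lra.
by have [] := h2 o; lra.
Qed.

Lemma monox j k : (1 <= j)%N -> (j <= k)%N -> (k <= 2 * m)%N -> xi j <= xi k.
Proof.
move=> hj; elim: k => [|k IH] hjk hk; first by move: hj hjk; case: j.
case: (ltnP j k.+1) => hjk'.
  have h1 : xi j <= xi k by apply: IH; lia.
  have h2 : xi k <= xi k.+1 by apply: stepx; apply/andP; split; lia.
  exact: le_trans h1 h2.
by have -> : j = k.+1 by lia.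
Qed.

Lemma monoy j k : (1 <= j)%N -> (j <= k)%N -> (k <= 2 * m)%N -> eta j <= eta k.
Proof.
move=> hj; elim: k => [|k IH] hjk hk; first by move: hj hjk; case: j.
case: (ltnP j k.+1) => hjk'.
  have h1 : eta j <= eta k by apply: IH; lia.
  have h2 : eta k <= eta k.+1 by apply: stepy; apply/andP; split; lia.
  exact: le_trans h1 h2.
by have -> : j = k.+1 by lia.
Qed.

Let L := polygonal_line m xi eta.

Lemma memL (a b : R) : L (a, b) ->
  (a = xi 1 /\ b <= eta 1) \/ (a = xi (2 * m) /\ eta (2 * m) <= b) \/
  (exists j, (1 <= j < 2 * m)%N /\ exists2 t, 0 <= t <= 1 &
     a = (1 - t) * xi j + t * xi j.+1 /\ b = (1 - t) * eta j + t * eta j.+1).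
Proof.
rewrite /L /polygonal_line /=; case=> [|[]]; [by left|by right;left|].
move=> [j [hj [t ht [-> ->]]]]; right; right; exists j; split => //.
by exists t.
Qed.

Lemma trich (a b : R) l : (1 <= l < 2 * m)%N -> L (a, b) ->
  (a <= xi l /\ b <= eta l) \/ (xi l.+1 <= a /\ eta l.+1 <= b) \/
  (exists2 t, 0 <= t <= 1 & a = (1-t)*xi l + t*xi l.+1 /\ b = (1-t)*eta l + t*eta l.+1).
Proof.
move=> hl /memL [[-> hb]|[[-> hb]|[j [hj [t ht [-> ->]]]]]].
- left; split; first by apply: monox; lia.
  by apply: le_trans hb _; apply: monoy; lia.
- right; left; split; first by apply: monox; lia.
  by apply: le_trans _ hb; apply: monoy; lia.
- case: (ltngtP j l) => hjl.
  + left; have h1 := stepx _ hj; have h2 := stepy _ hj.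
    have h3 : xi j.+1 <= xi l by apply: monox; lia.
    have h4 : eta j.+1 <= eta l by apply: monoy; lia.
    move/andP: ht => [t0 t1]; split; nra.
  + right; left; have h1 := stepx _ hj; have h2 := stepy _ hj.
    have h3 : xi l.+1 <= xi j by apply: monox; lia.
    have h4 : eta l.+1 <= eta j by apply: monoy; lia.
    move/andP: ht => [t0 t1]; split; nra.
  + by right; right; subst j; exists t.
Qed.

Definition GoodPt (g a b : R) := L (a, b) /\ exists2 d : R, 0 < d &
  forall a' b', L (a', b') -> `|a' - a| < d -> `|b' - b| < d ->
    g * (a' - a) = (1 - g) * (b' - b).

Lemma on_piece l t : (1 <= l < 2 * m)%N -> 0 <= t <= 1 ->
  L ((1-t)*xi l + t*xi l.+1, (1-t)*eta l + t*eta l.+1).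
Proof. by move=> hl ht; right; right; exists l; split => //; exists t. Qed.

Lemma abs_lt (x y : R) : `|x| < y -> - y < x /\ x < y.
Proof. by rewrite ltr_norml => /andP. Qed.

Lemma good_below b : b < eta 1 -> GoodPt 1 (xi 1) b.
Proof.
move=> hb; split; first by left; split => //; apply: ltW.
exists (eta 1 - b); first lra.
move=> a' b' /memL [[-> _]|[[-> hb']|[j [hj [t ht [-> ->]]]]]] _ /abs_lt [h1 h2].
- by rewrite !subrr mul0r mulr0.
- have : eta 1 <= eta (2 * m) by apply: monoy; lia.
  lra.
- have := stepy _ hj; have : eta 1 <= eta j by apply: monoy; lia.
  move/andP: ht => [t0 t1]; nra.
Qed.

Lemma good_above b : eta (2 * m) < b -> GoodPt 1 (xi (2 * m)) b.
Proof.
move=> hb; split; first by right; left; split => //; apply: ltW.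
exists (b - eta (2 * m)); first lra.
move=> a' b' /memL [[-> hb']|[[-> _]|[j [hj [t ht [-> ->]]]]]] _ /abs_lt [h1 h2].
- have : eta 1 <= eta (2 * m) by apply: monoy; lia.
  lra.
- by rewrite !subrr mul0r mulr0.
- have := stepy _ hj; have : eta j.+1 <= eta (2 * m) by apply: monoy; lia.
  move/andP: ht => [t0 t1]; nra.
Qed.

Lemma good_mid l t : (1 <= l < 2 * m)%N -> ~~ odd l -> 0 < t < 1 ->
  GoodPt 1 (xi l) ((1-t)*eta l + t*eta l.+1).
Proof.
move=> hl ol /andP[t0 t1]; have [_ /(_ ol) [hx hy]] := hD _ hl.
have ex : xi l.+1 = xi l by lra.
split.
  have -> : xi l = (1-t)*xi l + t*xi l.+1 by rewrite ex; ring.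
  by apply: on_piece => //; apply/andP; split; apply: ltW.
exists (Num.min (t * (eta l.+1 - eta l)) ((1-t) * (eta l.+1 - eta l))).
  by rewrite lt_min; apply/andP; split; apply: mulr_gt0 => //; lra.
move=> a' b' hL _; rewrite lt_min => /andP [/abs_lt [h1 h2] /abs_lt [h3 h4]].
case: (trich _ _ _ hl hL) => [[_ hb']|[[_ hb']|[t' _ [-> ->]]]].
- lra.
- lra.
- by rewrite ex; rewrite !mul1r subrr mul0r; ring.
Qed.

Lemma good_slope l t : (1 <= l < 2 * m)%N -> odd l -> 0 < t < 1 ->
  GoodPt ((eta l.+1 - eta l) / ((xi l.+1 - xi l) + (eta l.+1 - eta l)))
    ((1-t)*xi l + t*xi l.+1) ((1-t)*eta l + t*eta l.+1).
Proof.
move=> hl ol /andP[t0 t1]; have [/(_ ol) [hx hy] _] := hD _ hl.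
split; first by apply: on_piece => //; apply/andP; split; apply: ltW.
exists (Num.min (t * (xi l.+1 - xi l)) ((1-t) * (xi l.+1 - xi l))).
  by rewrite lt_min; apply/andP; split; apply: mulr_gt0 => //; lra.
move=> a' b' hL; rewrite lt_min => /andP [/abs_lt [h1 h2] /abs_lt [h3 h4]] _.
case: (trich _ _ _ hl hL) => [[ha' _]|[[ha' _]|[t' _ [-> ->]]]].
- lra.
- lra.
- field; lra.
Qed.

Definition Concl (g a b : R) := 0 <= g <= 1 /\
  exists d1 d2 : R, forall e, 0 < e <= 1 -> GoodPt g (a + e * d1) (b + e * d2).

Lemma VC_below g a b : a = xi 1 -> b <= eta 1 -> g = 1 -> Concl g a b.
Proof.
move=> -> hb ->; split; first by rewrite ler01 lexx.
exists 0, (-1) => e /andP[e0 e1]; rewrite mulr0 addr0.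
by apply: good_below; lra.
Qed.

Lemma VC_above g a b : a = xi (2 * m) -> eta (2 * m) <= b -> g = 1 -> Concl g a b.
Proof.
move=> -> hb ->; split; first by rewrite ler01 lexx.
exists 0, 1 => e /andP[e0 e1]; rewrite mulr0 addr0.
by apply: good_above; lra.
Qed.

Lemma VC_mid g a b l t : (1 <= l < 2 * m)%N -> ~~ odd l -> 0 <= t <= 1 ->
  a = xi l -> b = (1-t)*eta l + t*eta l.+1 -> g = 1 -> Concl g a b.
Proof.
move=> hl ol /andP[t0 t1] -> -> ->; split; first by rewrite ler01 lexx.
exists 0, ((2^-1 - t) * (eta l.+1 - eta l)) => e /andP[e0 e1]; rewrite mulr0 addr0.
have -> : (1 - t) * eta l + t * eta l.+1 + e * ((2^-1 - t) * (eta l.+1 - eta l))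
   = (1 - ((1-e)*t + e/2)) * eta l + ((1-e)*t + e/2) * eta l.+1 by field.
by apply: good_mid => //; apply/andP; split; nra.
Qed.

Lemma core a b g : L (a, b) -> (Aset m xi a -> g = 1) ->
  (forall j : nat, (1 <= j < 2 * m)%N -> odd j ->
        xi j <= a <= xi j.+1 -> ~ Aset m xi a ->
        g = (eta j.+1 - eta j) / ((xi j.+1 - xi j) + (eta j.+1 - eta j))) ->
  Concl g a b.
Proof.
move=> hL hA hS.
case: (memL _ _ hL) => [[ea hb]|[[ea hb]|[l [hl [t ht [ea eb]]]]]].
- by apply: (VC_below _ _ _ ea hb); apply: hA; rewrite /Aset /=; left.
- by apply: (VC_above _ _ _ ea hb); apply: hA; rewrite /Aset /=; right; left.
have [ho he] := hD _ hl; case: (boolP (odd l)) => ol; last first.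
  have [hx _] := he ol.
  have ex : xi l.+1 = xi l by lra.
  have ea' : a = xi l by rewrite ea ex; ring.
  apply: (VC_mid _ _ _ _ _ hl ol ht ea' eb); apply: hA; rewrite /Aset /=; right; right; exists l; split => //.
have [hx hy] := ho ol; move/andP: ht => [t0 t1].
case: (t =P 0) => [t00|tn0].
  subst t.
  have ea' : a = xi l by rewrite ea; ring.
  have eb' : b = eta l by rewrite eb; ring.
  case: (l =P 1%N) => [l1|ln1].
    subst l; apply: (VC_below _ _ _ ea' _ _); first by rewrite eb'.
    by apply: hA; rewrite /Aset /=; left.
  have hk : (1 <= l.-1 < 2 * m)%N by apply/andP; split; move/andP: hl; lia.
  have lk : l = l.-1.+1 by move/andP: hl; lia.
  rewrite lk /= in ol ea' eb'.
  have [_ /(_ ol) [hx' _]] := hD _ hk.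
  apply: (VC_mid _ _ _ l.-1 1 hk ol _ _ _ _).
  - by rewrite ler01 lexx.
  - lra.
  - by rewrite eb'; ring.
  - apply: hA; rewrite /Aset /=; right; right; exists l.-1; split => //; split => //; lra.
case: (t =P 1) => [t11|tn1].
  subst t.
  have ea' : a = xi l.+1 by rewrite ea; ring.
  have eb' : b = eta l.+1 by rewrite eb; ring.
  case: (l.+1 =P (2 * m)%N) => [e2|ne2].
    rewrite e2 in ea' eb'; apply: (VC_above _ _ _ ea' _ _); first by rewrite eb'.
    by apply: hA; rewrite /Aset /=; right; left.
  have hk : (1 <= l.+1 < 2 * m)%N by apply/andP; split; move/andP: hl; move/eqP: ne2; lia.
  have ok : ~~ odd l.+1 by rewrite /= ol.
  have [_ /(_ ok) [hx' _]] := hD _ hk.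
  apply: (VC_mid _ _ _ l.+1 0 hk ok _ _ _ _).
  - by rewrite lexx ler01.
  - done.
  - by rewrite eb'; ring.
  - apply: hA; rewrite /Aset /=; right; right; exists l.+1; split => //; split => //; lra.
have t0' : 0 < t by rewrite lt_def t0 andbT; apply/eqP.
have t1' : t < 1.
  by rewrite lt_def t1 andbT; apply/eqP => h; apply: tn1; rewrite h.
have nA : ~ Aset m xi a.
  rewrite /Aset /= => [[h|[h|[j [hj [hxj h]]]]]].
  - have : xi 1 <= xi l by apply: monox; move/andP: hl; lia.
    nra.
  - have : xi l.+1 <= xi (2 * m) by apply: monox; move/andP: hl; lia.
    nra.
  - case: (leqP j l) => hjl.
      have : xi j <= xi l by apply: monox; move/andP: hj; lia.
      nra.
    have : xi l.+1 <= xi j by apply: monox; move/andP: hj; lia.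
    nra.
have hg := hS l hl ol.
have -> : g = (eta l.+1 - eta l) / (xi l.+1 - xi l + (eta l.+1 - eta l)).
  by apply: hg => //; rewrite ea; apply/andP; split; nra.
split.
  apply/andP; split; first by apply: divr_ge0; lra.
  by rewrite ler_pdivrMr ?mul1r; lra.
exists 0, 0 => e _; rewrite !mulr0 !addr0 ea eb.
by apply: good_slope => //; apply/andP.
Qed.

End Poly.
Arguments Concl {R}. Arguments GoodPt {R}.

Section Sep.
Variables (R : realType) (n : nat) (qi : 'I_n -> R -> \bar R).
Hypothesis hp : forall i t, qi i t != -oo%E.

Lemma sep_sub_fin x s : subdiff (sep_sum qi) x s ->
  forall i, subdiff1 (qi i) (x i ord0) (s i ord0).
Proof.
move=> [hf hy] i.
have hfi : forall k, qi k (x k ord0) \is a fin_num.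
  by move=> k; move/sum_fin_numP: hf; apply => //; rewrite mem_index_enum.
split => // y.
pose Y : 'cV[R]_n := \col_k (if k == i then y else x k ord0).
have := hy Y.
have -> : dotv s (Y - x) = s i ord0 * (y - x i ord0).
  rewrite /dotv (bigD1 i) //= big1 ?addr0; first by rewrite !mxE eqxx.
  by move=> k /negbTE hk; rewrite !mxE hk subrr mulr0.
pose rx k := fine (qi k (x k ord0)).
have eX : sep_sum qi x = (\sum_(k < n) rx k)%:E.
  by rewrite /sep_sum -sumEFin; apply: eq_bigr => k _; rewrite /rx fineK.
case E: (qi i y) => [q| |].
- have eY : sep_sum qi Y = (\sum_(k < n) (if k == i then q else rx k))%:E.
    rewrite /sep_sum -sumEFin; apply: eq_bigr => k _; rewrite !mxE.
    by case: eqP => [->|_]; [rewrite E|rewrite /rx fineK].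
  rewrite eX eY -EFinD lee_fin (bigD1 i) //= [X in _ <= X](bigD1 i) //= eqxx.
  have -> : \sum_(k < n | k != i) (if k == i then q else rx k) = \sum_(k < n | k != i) rx k.
    by apply: eq_bigr => k /negbTE ->.
  move=> h; rewrite -(fineK (hfi i)) -EFinD lee_fin -/(rx i); lra.
- by move=> _; rewrite leey.
- by move: (hp i y); rewrite E.
Qed.

Lemma fin_sub_sep (x s : 'cV[R]_n) : (forall i, subdiff1 (qi i) (x i ord0) (s i ord0)) ->
  subdiff (sep_sum qi) x s.
Proof.
move=> h; split.
  by apply/sum_fin_numP => k _ _; have [] := h k.
move=> y; rewrite /sep_sum /dotv.
have -> : \sum_(i < n) s i ord0 * (y - x) i ord0 = \sum_(i < n) s i ord0 * (y i ord0 - x i ord0).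
  by apply: eq_bigr => i _; rewrite !mxE.
rewrite -sumEFin -big_split /=; apply: lee_sum => i _.
by have [_ ] := h i; apply.
Qed.

End Sep.

Lemma cvg_fst_mx (R : realType) n (wk : nat -> 'cV[R]_n * 'cV[R]_n) (w : 'cV[R]_n * 'cV[R]_n) :
  wk @ \oo --> w -> (fun j => (wk j).1) @ \oo --> w.1.
Proof. move=> hw; have := cvg_comp wk fst hw (@cvg_fst _ _ (nbhs w.1) (nbhs w.2) _). exact. Qed.

Lemma cvg_snd_mx (R : realType) n (wk : nat -> 'cV[R]_n * 'cV[R]_n) (w : 'cV[R]_n * 'cV[R]_n) :
  wk @ \oo --> w -> (fun j => (wk j).2) @ \oo --> w.2.
Proof. move=> hw; have := cvg_comp wk snd hw (@cvg_snd _ _ (nbhs w.1) (nbhs w.2) _). exact. Qed.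

Lemma cvg_entry (R : realType) n (i : 'I_n) (f : nat -> 'cV[R]_n) (a : 'cV[R]_n) :
  f @ \oo --> a -> (fun j => f j i ord0) @ \oo --> a i ord0.
Proof.
move=> /cvg_mx_entourageP h.
apply/(@cvg_entourageP R ((fun j => f j i ord0) @ \oo) _ (a i ord0)) => A hA.
move: (h A hA) => [N _ HN]; exists N => // j hj.
by have := HN j hj; move/(_ i ord0); rewrite inE.
Qed.

Arguments cvg_entry {R n} i {f a}.
Arguments cvg_fst_mx {R n wk w}.
Arguments cvg_snd_mx {R n wk w}.

Theorem proposition6p1 (R : realType) (n : nat)
  (qi : 'I_n -> R -> \bar R) (m : 'I_n -> nat) (xi eta : 'I_n -> nat -> R)
  (x xs : 'cV[R]_n) (g : 'I_n -> R) :
  (forall i, proper_fun (qi i) /\ convex_fun (qi i) /\ lsc_fun (qi i)) ->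
  (forall i, (1 <= m i)%N) ->
  (forall i, gph1 (subdiff1 (qi i)) = polygonal_line (m i) (xi i) (eta i)) ->
  (forall i (j : nat), (1 <= j < 2 * m i)%N ->
     (odd j -> 0 < xi i j.+1 - xi i j /\ 0 <= eta i j.+1 - eta i j) /\
     (~~ odd j -> xi i j.+1 - xi i j = 0 /\ 0 < eta i j.+1 - eta i j)) ->
  subdiff (sep_sum qi) x xs ->
  (forall i,
     (Aset (m i) (xi i) (x i ord0) -> g i = 1) /\
     (forall j : nat, (1 <= j < 2 * m i)%N -> odd j ->
        xi i j <= x i ord0 <= xi i j.+1 -> ~ Aset (m i) (xi i) (x i ord0) ->
        g i = (eta i j.+1 - eta i j) /
              ((xi i j.+1 - xi i j) + (eta i j.+1 - eta i j)))) ->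
  let G : 'M[R]_n := diag_mx (\row_i g i) in
  psd G /\ spectral_norm G <= 1 /\
  (forall v : 'cV[R]_n,
     gph_coderivative (subdiff (sep_sum qi)) x xs ((1%:M - G) *m v, G *m v)).
Proof.
move=> hq hm hG hD hx hg G.
have hp : forall i t, qi i t != -oo%E by move=> i t; have [[hp _] _] := hq i.
have gphC : forall u w : 'cV[R]_n, gph (subdiff (sep_sum qi)) (u, w) <->
    forall i, polygonal_line (m i) (xi i) (eta i) (u i ord0, w i ord0).
  move=> u w; rewrite /gph /=; split.
    by move=> h i; rewrite -(hG i) /gph1 /=; exact: (@sep_sub_fin _ _ _ hp _ _ h i).
  move=> h; apply: (@fin_sub_sep _ _ _ u w) => i; have := h i; rewrite -(hG i) /gph1 /=.
  done.
have hC : forall i, Concl (m i) (xi i) (eta i) (g i) (x i ord0) (xs i ord0).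
  move=> i; have [hA hS] := hg i.
  apply: (@core _ _ _ _ (hm i) (hD i)) => //.
  exact: ((gphC x xs).1 hx i).
have hg01 : forall i, 0 <= g i <= 1 by move=> i; have [] := hC i.
have /choice [D hD'] : forall i, exists d : R * R, forall e, 0 < e <= 1 ->
    GoodPt (m i) (xi i) (eta i) (g i) (x i ord0 + e * d.1) (xs i ord0 + e * d.2).
  by move=> i; have [_ [d1 [d2 h]]] := hC i; exists (d1, d2).
have Gentry : forall (v : 'cV[R]_n) (i : 'I_n), (G *m v) i ord0 = g i * v i ord0.
  by move=> v i; rewrite /G mul_diag_mx !mxE.
have G1entry : forall (v : 'cV[R]_n) (i : 'I_n), ((1%:M - G) *m v) i ord0 = (1 - g i) * v i ord0.
  by move=> v i; rewrite mulmxBl mul1mx mxE [X in _ + X]mxE Gentry; ring.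
split.
  move=> v; rewrite /dotv; apply: sumr_ge0 => i _; rewrite Gentry.
  have := hg01 i; move/andP => [g0 g1]; nra.
split.
  rewrite /spectral_norm.
  set S := [set _ | _ in _].
  have ub : ubound S 1.
    move=> y [v /= hv <-].
    have h0 : 0 <= dotv v v by apply: sumr_ge0 => i _; rewrite -expr2 sqr_ge0.
    have dv : dotv v v = 1.
      by rewrite -(sqr_sqrtr h0); rewrite /eucl_norm in hv; rewrite hv expr1n.
    rewrite /eucl_norm -(sqrtr1 R) -dv; apply: ler_wsqrtr.
    rewrite /dotv; apply: ler_sum => i _; rewrite Gentry.
    have := hg01 i; move/andP => [g0 g1].
    have h1 : g i * g i <= 1 by nra.
    have h2 : 0 <= v i ord0 * v i ord0 by nra.
    have -> : g i * v i ord0 * (g i * v i ord0) = (g i * g i) * (v i ord0 * v i ord0) by ring.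
    by rewrite ler_piMl.
  case: (pselect (S !=set0)) => [ne|e]; first exact: ge_sup ne ub.
  have -> : S = set0.
    by apply/seteqP; split => // y Sy; exfalso; apply: e; exists y.
  by rewrite sup0 ler01.
have sub_simpl : forall a u : R, a + u - a = u by move=> a u; ring.
move=> v; rewrite /gph_coderivative /coderivative /=.
split; first exact: hx.
pose d1 : 'cV[R]_n := \col_i (D i).1.
pose d2 : 'cV[R]_n := \col_i (D i).2.
pose h (k : nat) : R := harmonic k.
have hh : forall k, 0 < h k <= 1.
  move=> k; rewrite /h /harmonic /= invr_gt0 ltr0Sn /= invf_le1 ?ltr0Sn //.
  by rewrite ler1n.
pose z_ := fun k : nat => (x + h k *: d1, xs + h k *: d2).
pose nu := (G *m v, - ((1%:M - G) *m v)).
exists z_, (fun _ => nu).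
split.
  move=> k; apply/gphC => i; rewrite !mxE.
  by have [] := hD' i (h k) (hh k).
split.
  have hA : (fun k => x + h k *: d1) @ \oo --> x + 0 *: d1.
    apply: cvgD; first exact: cvg_cst.
    by apply: cvgZ; [exact: cvg_harmonic | exact: cvg_cst].
  rewrite scale0r addr0 in hA.
  have hB : (fun k => xs + h k *: d2) @ \oo --> xs + 0 *: d2.
    apply: cvgD; first exact: cvg_cst.
    by apply: cvgZ; [exact: cvg_harmonic | exact: cvg_cst].
  rewrite scale0r addr0 in hB.
  have := cvg_pair hA hB.
  exact.
split; first exact: cvg_cst.
move=> k w [t [wk [ht [ht0 [hw hmem]]]]].
suff h0 : forall i, g i * (w.1 i ord0) - (1 - g i) * (w.2 i ord0) = 0.
  rewrite /dot2 /dotv /= -big_split /= le_eqVlt; apply/orP; left; apply/eqP.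
  rewrite big1 // => i _; rewrite Gentry mxE G1entry.
  rewrite -[RHS](mulr0 (v i ord0)) -(h0 i); ring.
move=> i.
have [_ [del del0 hdel]] := hD' i (h k) (hh k).
have h1 := cvg_entry i (cvg_fst_mx hw).
have h2 := cvg_entry i (cvg_snd_mx hw).
pose c j := g i * (wk j).1 i ord0 - (1 - g i) * (wk j).2 i ord0.
have hc : c @ \oo --> g i * w.1 i ord0 - (1 - g i) * w.2 i ord0.
  by apply: cvgB; apply: cvgM => //; exact: cvg_cst.
have e1 : (fun j => t j * (wk j).1 i ord0) @ \oo --> 0 * w.1 i ord0.
  exact: cvgM.
rewrite mul0r in e1.
have e2 : (fun j => t j * (wk j).2 i ord0) @ \oo --> 0 * w.2 i ord0.
  exact: cvgM.
rewrite mul0r in e2.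
have [N1 _ H1] := cvgr0_norm_lt _ e1 _ del0.
have [N2 _ H2] := cvgr0_norm_lt _ e2 _ del0.
have ev : forall j, (maxn N1 N2 <= j)%N -> c j = 0.
  move=> j hj.
  have hL := (gphC _ _).1 (hmem j) i.
  rewrite /= !mxE in hL.
  have E := hdel _ _ hL.
  rewrite !sub_simpl in E.
  have E' := E (H1 j (leq_trans (leq_maxl _ _) hj)) (H2 j (leq_trans (leq_maxr _ _) hj)).
  have : t j * c j = 0.
    have -> : t j * c j = g i * (t j * (wk j).1 i ord0) - (1 - g i) * (t j * (wk j).2 i ord0).
      by rewrite /c; ring.
    by rewrite E' subrr.
  move/eqP; rewrite mulf_eq0 => /orP [/eqP tj0|/eqP //].
  by have := ht j; rewrite tj0 ltxx.
set Lc := g i * w.1 i ord0 - (1 - g i) * w.2 i ord0.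
apply/eqP; apply/negPn/negP => Ln0.
have Lpos : 0 < `|Lc| by rewrite normr_gt0.
have [N3 _ H3] := (cvgrPdist_lt _ _).1 hc _ Lpos.
have := H3 (maxn (maxn N1 N2) N3) (leq_maxr _ _).
by rewrite /= ev ?leq_maxl // subr0 ltxx.
Qed.
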